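(* Suppose Assumptions 1–6 hold. Then (i) $m_n^{**}\to\infty$ as $n\to\infty$; (ii) $R_n(m_n^* )\to\infty$ and $R_n(\mathbf w_n^* )\to\infty$ as $n\to\infty$ (for any choice of $M_n$ with $2\le M_n\le q_n$).
   Context: Setting. For each sample size $n$ one observes $\mathbf y=\boldsymbol\mu+\boldsymbol\varepsilon\in\mathbb R^n$ with $\boldsymbol\mu=\mathbf X\boldsymbol\beta$, where $\mathbf X=(x_{ij})$ is a nonstochastic $n\times p_n$ matrix with $p_n<n$, $\boldsymbol\beta\in\mathbb R^{p_n}$, $E(\boldsymbol\varepsilon)=\mathbf 0$ and $\mathrm{Cov}(\boldsymbol\varepsilon)=\boldsymbol\Omega$ positive definite (all may depend on $n$). Fix integers $0=\nu_0<\nu_1<\cdots<\nu_{q_n}=p_n$. For $m=1,\dots,q_n$, $\mathbf X_m$ is the $n\times\nu_m$ matrix of the first $\nu_m$ columns of $\mathbf X$ (full column rank), $\mathbf P_m=\mathbf X_m(\mathbf X_m^\top\mathbf X_m)^{-1}\mathbf X_m^\top$, $\mathbf P_0=\mathbf 0$. Candidate models are $m\in\{1,\dots,M_n\}$, $2\le M_n\le q_n$. $R_n(m)=E\|\mathbf P_m\mathbf y-\boldsymbol\mu\|^2$; for $\mathbf w\in\mathbb R^{M_n}$, $R_n(\mathbf w)=E\|\sum_{m=1}^{M_n}w_m\mathbf P_m\mathbf y-\boldsymbol\mu\|^2$. $\mathcal W_n=\{\mathbf w\in[0,1]^{M_n}:\sum_m w_m=1\}$. $m_n^*$ minimizes $R_n(m)$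 over $\{1,\dots,M_n\}$, $m_n^{**}$ minimizes $R_n(m)$ over $\{1,\dots,q_n\}$, $\mathbf w_n^*$ minimizes $R_n(\mathbf w)$ over $\mathcal W_n$ (all assumed unique). $\theta_{n,m}=\dfrac{n^{-1}\boldsymbol\mu^\top(\mathbf P_m-\mathbf P_{m-1})\boldsymbol\mu}{\mathrm{tr}\{(\mathbf P_m-\mathbf P_{m-1})\boldsymbol\Omega\}}$ for $m=1,\dots,q_n$, and $d_n=\max\{m:\theta_{n,m}>0\}$. Assumption 1: $\|\boldsymbol\mu\|^2/n=O(1)$. Assumption 2: constants $0<c_1\le c_2<\infty$ with $c_1<\lambda_{\min}(\boldsymbol\Omega)\le\lambda_{\max}(\boldsymbol\Omega)<c_2$. Assumption 3: for each sufficiently large $n$, $\theta_{n,1}\ge\cdots\ge\theta_{n,q_n}$. Assumption 4: there is a constant $V\ge1$ with $\max_{1\le m\le d_n}(\nu_m-\nu_{m-1})\le V$ for all large $n$. Assumption 5: for every fixed positive integer $m$ there are constants $\bar\theta_m>0$ and $K_m>0$ such that for all $n\ge K_m$, $m\le d_n$ and $\theta_{n,m}\ge\bar\theta_m$. Assumption 6: for each sufficiently large $n$ there is $m_n'\in\{1,\dots,d_n-1\}$ with $R_n(m)<R_n(m-1)$ for $2\le m\le m_n'$, $R_n(m)\ge R_n(m-1)$ for $m_n'<m\le d_n$, and $R_n(d_n)>R_n(d_n-1)$. *)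

(* Defs.v *)
From HB Require Import structures.
From mathcomp Require Import all_boot all_order all_algebra.
From mathcomp Require Import reals.
Set Implicit Arguments. Unset Strict Implicit. Unset Printing Implicit Defensive.
Import Order.TTheory GRing.Theory Num.Theory.
Local Open Scope ring_scope.

Section ModelAveraging.
Variable R : realType.

(* selection matrix: X *m sel p k = first k columns of X (when k <= p) *)
Definition sel (p k : nat) : 'M[R]_(p, k) :=
  \matrix_(i < p, j < k) (((i : nat) == (j : nat)) %:R).

Definition firstcols (n p : nat) (X : 'M[R]_(n, p)) (k : nat) : 'M[R]_(n, k) :=
  X *m sel p k.

(* hat / projection matrix X_k (X_k^T X_k)^{-1} X_k^T ; equals 0 for k = 0 *)
Definition proj (n p : nat) (X : 'M[R]_(n, p)) (k : nat) : 'M[R]_n :=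
  let Xk := firstcols X k in Xk *m invmx (Xk^T *m Xk) *m Xk^T.

Definition sqnorm (n : nat) (v : 'cV[R]_n) : R := \sum_(i < n) (v i 0) ^+ 2.

(* E || A y - mu ||^2 for y = mu + eps, E eps = 0, Cov eps = Om *)
Definition risk (n : nat) (mu : 'cV[R]_n) (Om : 'M[R]_n) (A : 'M[R]_n) : R :=
  sqnorm ((A - 1%:M) *m mu) + \tr (A *m Om *m A^T).

Definition risk_m (n p : nat) (X : 'M[R]_(n, p)) (beta : 'cV[R]_p) (Om : 'M[R]_n)
  (nu : nat -> nat) (m : nat) : R :=
  risk (X *m beta) Om (proj X (nu m)).

(* R_n(w), w : 'rV_M, coordinate i <-> model i+1 *)
Definition risk_w (n p : nat) (X : 'M[R]_(n, p)) (beta : 'cV[R]_p) (Om : 'M[R]_n)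
  (nu : nat -> nat) (M : nat) (w : 'rV[R]_M) : R :=
  risk (X *m beta) Om (\sum_(i < M) w 0 i *: proj X (nu i.+1)).

Definition simplexW (M : nat) (w : 'rV[R]_M) : Prop :=
  (forall i : 'I_M, 0 <= w 0 i <= 1) /\ \sum_(i < M) w 0 i = 1.

Definition theta (n p : nat) (X : 'M[R]_(n, p)) (beta : 'cV[R]_p) (Om : 'M[R]_n)
  (nu : nat -> nat) (m : nat) : R :=
  let mu := X *m beta in
  let D := proj X (nu m) - proj X (nu m.-1) in
  (n%:R^-1 * (mu^T *m D *m mu) 0 0) / \tr (D *m Om).

(* d_n = max { m in 1..q : theta_{n,m} > 0 } (0 if empty) *)
Definition dn (n p : nat) (X : 'M[R]_(n, p)) (beta : 'cV[R]_p) (Om : 'M[R]_n)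
  (nu : nat -> nat) (q : nat) : nat :=
  \max_(m < q.+1 | (0 < (m : nat))%N && (0 < theta X beta Om nu m)) (m : nat).

Definition posdef (n : nat) (A : 'M[R]_n) : Prop :=
  A^T = A /\ forall x : 'cV[R]_n, x != 0 -> 0 < (x^T *m A *m x) 0 0.

(* c1 < lambda_min(A) <= lambda_max(A) < c2 : every (real) eigenvalue of the
   symmetric matrix A lies in the open interval (c1, c2) *)
Definition eig_between (n : nat) (A : 'M[R]_n) (c1 c2 : R) : Prop :=
  forall a : R, eigenvalue A a -> c1 < a < c2.

End ModelAveraging.

(* Main.v *)
Require Import Defs.
From HB Require Import structures.
From mathcomp Require Import all_boot all_order all_algebra.
From mathcomp Require Import reals complex.
From mathcomp Require Import ring lra.
Import Order.TTheory GRing.Theory Num.Theory.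
Local Open Scope ring_scope.

Set Implicit Arguments. Unset Strict Implicit. Unset Printing Implicit Defensive.
Section Spec.
Variable R : realType.
Local Open Scope complex_scope.
Local Notation C := (R[i]).
Local Notation f := (real_complex R).
Lemma cr (y : R) : Num.conj (y%:C : R[i]) = y%:C.
Proof. exact: conjc_real. Qed.

Lemma herm_map n (Om : 'M[R]_n) : Om^T = Om -> map_mx f Om \is hermsymmx.
Proof.
move=> OmT; apply/is_hermitianmxP; rewrite expr0 scale1r.
apply/matrixP=> i j; rewrite !mxE /= cr.
by rewrite -[in RHS]OmT mxE.
Qed.

Lemma conj_map m n (B : 'M[R]_(m,n)) : map_mx Num.conj (map_mx f B) = map_mx f B.
Proof. by apply/matrixP=> i j; rewrite !mxE /= cr. Qed.

Lemma real_entry (x : C) : x \is Num.real -> x = f (complex.Re x).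
Proof.
case: x => a b; rewrite realE !lecE /= => /orP[/andP[H _]|/andP[H _]]; move/eqP: H => H; apply/eqP; rewrite eq_complex /= eqxx /= ?H //.
Qed.

Lemma quad_lb n (Om : 'M[R]_n) (c1 : R) : Om^T = Om ->
  (forall a, eigenvalue Om a -> c1 < a) ->
  forall x : 'cV[R]_n, c1 * (x^T *m x) 0 0 <= (x^T *m Om *m x) 0 0.
Proof.
move=> OmT Heig x.
set A := map_mx f Om.
have Aherm : A \is hermsymmx by exact: herm_map.
have /orthomx_spectralP Aeq := hermitian_normalmx Aherm.
have dreal := hermitian_spectral_diag_real Aherm.
set P := spectralmx A in Aeq; set d := spectral_diag A in Aeq dreal.
have Pu : P \is unitarymx by exact: spectral_unitarymx.
have Punit : P \in unitmx by exact: spectral_unit.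
have iP : invmx P = P^t*%sesqui by exact: invmx_unitary.
have PPt : P *m P^t*%sesqui = 1%:M by rewrite -iP mulmxV.
have PtP : P^t*%sesqui *m P = 1%:M by rewrite -iP mulVmx.
have dj : forall j, d 0 j = f (complex.Re (d 0 j)).
  by move=> j; apply: real_entry; move/mxOverP: dreal; apply.
have rj : forall j, c1 < complex.Re (d 0 j).
  move=> j; apply: Heig; rewrite eigenvalue_root_char.
  rewrite -(fmorph_root f) map_char_poly -/A.
  suff H : root (char_poly A) (d 0 j) by rewrite (dj j) in H; exact: H.
  rewrite -eigenvalue_root_char.
  apply/eigenvalueP; exists (row j P).
    rewrite Aeq iP !mulmxA -row_mul PPt row1.
    by rewrite -rowE row_diag_mx -scalemxAl -rowE.
  apply/negP => /eqP H; move/(congr1 (fun M => (row j M) 0 j)): PPt.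
  by rewrite row_mul H mul0mx !mxE eqxx /= => /eqP; rewrite eq_sym oner_eq0.
have mapE : forall B : 'M[R]_1, f (B 0 0) = (map_mx f B) 0 0 by move=> B; rewrite mxE.
set xc := map_mx f x.
suff H : f c1 * (xc^T *m xc) 0 0 <= (xc^T *m A *m xc) 0 0.
  rewrite /xc /A !map_trmx -!map_mxM -!mapE -rmorphM lecR in H.
  exact: H.
have xcT : map_mx Num.conj xc^T = xc^T by rewrite /xc map_trmx conj_map.
set y := P *m xc.
have yT : map_mx Num.conj y^T = xc^T *m map_mx Num.conj P^T.
  by rewrite /y trmx_mul map_mxM xcT.
have E1 : xc^T *m A *m xc = map_mx Num.conj y^T *m diag_mx d *m y.
  by rewrite yT Aeq iP !mulmxA.
have E2 : xc^T *m xc = map_mx Num.conj y^T *m y.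
  by rewrite yT /y mulmxA -(mulmxA xc^T) PtP mulmx1.
rewrite E1 E2 mul_mx_diag !mxE mulr_sumr; apply: ler_sum => k _.
rewrite !mxE; set z := \sum_j _; rewrite mulrAC [X in X <= _]mulrC; apply: ler_wpM2l.
  by rewrite mulrC mul_conjC_ge0.
rewrite (dj k) lecR; exact: ltW.
Qed.
End Spec.

Section Gen.
Variable R : realType.

Lemma quadE n (v : 'cV[R]_n) : (v^T *m v) 0 0 = \sum_i v i 0 ^+ 2.
Proof. by rewrite !mxE; apply: eq_bigr => i _; rewrite !mxE expr2. Qed.

Lemma sqnormE n (v : 'cV[R]_n) : sqnorm v = (v^T *m v) 0 0.
Proof. by rewrite quadE. Qed.

Lemma quad_ge0 n (v : 'cV[R]_n) : 0 <= (v^T *m v) 0 0.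
Proof. by rewrite quadE sumr_ge0 // => i _; rewrite sqr_ge0. Qed.

Lemma quad_eq0 n (v : 'cV[R]_n) : (v^T *m v) 0 0 = 0 -> v = 0.
Proof.
rewrite quadE => /eqP; rewrite psumr_eq0 => [/allP H|i _]; last by rewrite sqr_ge0.
apply/matrixP => i j; rewrite ord1 mxE; apply/eqP; rewrite -sqrf_eq0.
by apply: (implyP (H i (mem_index_enum i))).
Qed.

Lemma tr_quad n m (B : 'M[R]_(n,m)) (Om : 'M[R]_m) :
  \tr (B *m Om *m B^T) = \sum_i ((row i B)^T^T *m Om *m (row i B)^T) 0 0.
Proof.
rewrite /mxtrace; apply: eq_bigr => i _; rewrite trmxK !mxE; apply: eq_bigr => l _.
rewrite !mxE; congr (_ * _); by apply: eq_bigr => t _; rewrite !mxE.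
Qed.

Lemma tr_ge0 n m (B : 'M[R]_(n,m)) : 0 <= \tr (B *m B^T).
Proof.
rewrite -[B *m _](congr1 (mulmx^~ B^T) (mulmx1 B)) tr_quad sumr_ge0 // => i _.
by rewrite mulmx1 quad_ge0.
Qed.

Lemma tr_lb n m (B : 'M[R]_(n,m)) (Om : 'M[R]_m) c1 :
  (forall x : 'cV[R]_m, c1 * (x^T *m x) 0 0 <= (x^T *m Om *m x) 0 0) ->
  c1 * \tr (B *m B^T) <= \tr (B *m Om *m B^T).
Proof.
move=> H; rewrite -[B *m _](congr1 (mulmx^~ B^T) (mulmx1 B)) !tr_quad mulr_sumr.
by apply: ler_sum => i _; rewrite mulmx1.
Qed.
Definition symid n (E : 'M[R]_n) := E^T = E /\ E *m E = E.

Lemma G_unit n k (Y : 'M[R]_(n,k)) : \rank Y = k -> (Y^T *m Y) \in unitmx.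
Proof.
move=> rk; rewrite -row_free_unit -kermx_eq0; apply/eqP/row_matrixP => i.
rewrite row0; set u := row i _.
have hu : u *m (Y^T *m Y) = 0 by rewrite /u -row_mul mulmx_ker row0.
have : ((Y *m u^T)^T *m (Y *m u^T)) 0 0 = 0.
  by rewrite trmx_mul trmxK mulmxA -(mulmxA u) hu mul0mx mxE.
move/quad_eq0 => /(congr1 trmx); rewrite trmx_mul trmxK trmx0 => /eqP.
rewrite mulmx_free_eq0 => [/eqP //|].
by rewrite /row_free mxrank_tr rk.
Qed.

Lemma symP n k (Y : 'M[R]_(n,k)) :
  (Y *m invmx (Y^T *m Y) *m Y^T)^T = Y *m invmx (Y^T *m Y) *m Y^T.
Proof. by rewrite !trmx_mul trmxK trmx_inv trmx_mul trmxK mulmxA. Qed.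

Lemma proj_props n p (X : 'M[R]_(n,p)) k : \rank (firstcols X k) = k ->
  [/\ symid (proj X k), proj X k *m firstcols X k = firstcols X k
    & \tr (proj X k) = k%:R].
Proof.
move=> rk; have Gu := G_unit rk.
set Y := firstcols X k in Gu *.
have PY : proj X k *m Y = Y.
  by rewrite /proj -/Y -!mulmxA mulVmx // mulmx1.
split => //; last first.
  by rewrite /proj -/Y -mulmxA mxtrace_mulC -mulmxA mulVmx // mxtrace1.
split; last first.
  have E : proj X k = Y *m (invmx (Y^T *m Y) *m Y^T) by rewrite mulmxA.
  by rewrite {2}E mulmxA PY -E.
exact: symP.
Qed.

Lemma proj0 n p (X : 'M[R]_(n,p)) : proj X 0 = 0.
Proof. by rewrite /proj thinmx0 !mul0mx. Qed.

Lemma sel_mul p k j : (j <= k)%N -> sel R p k *m sel R k j = sel R p j.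
Proof.
move=> jk; apply/matrixP => i l; rewrite !mxE.
have lk : (l < k)%N by apply: leq_trans (ltn_ord l) jk.
rewrite (bigD1 (Ordinal lk)) //= !mxE eqxx mulr1 big1 ?addr0 // => t.
rewrite -val_eqE /= => /negbTE tl; rewrite !mxE tl mulr0 //.
Qed.

Lemma firstcols_nest n p (X : 'M[R]_(n,p)) j k : (j <= k)%N ->
  firstcols X j = firstcols X k *m sel R k j.
Proof. by move=> jk; rewrite /firstcols -mulmxA sel_mul. Qed.
Lemma symid0 n : symid (0 : 'M[R]_n).
Proof. by split; rewrite ?trmx0 ?mul0mx. Qed.

Lemma symidC n (E : 'M[R]_n) : symid E -> symid (1%:M - E).
Proof.
case=> ET EE; split; first by rewrite linearB /= trmx1 ET.
by rewrite mulmxBl !mulmxBr EE !mul1mx mulmx1 subrr subr0.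
Qed.

Lemma symid_quad n (E : 'M[R]_n) (v : 'cV[R]_n) : symid E ->
  (v^T *m E *m v) 0 0 = ((E *m v)^T *m (E *m v)) 0 0.
Proof. by case=> ET EE; rewrite trmx_mul ET !mulmxA -(mulmxA v^T E E) EE. Qed.

Lemma symid_tr n m (E : 'M[R]_n) (B : 'M[R]_(m,n)) : symid E ->
  \tr (B *m E *m B^T) = \tr ((B *m E) *m (B *m E)^T).
Proof. by case=> ET EE; rewrite trmx_mul ET !mulmxA -(mulmxA B E E) EE. Qed.

Lemma risk_symid n (mu : 'cV[R]_n) (Om E : 'M[R]_n) : symid E ->
  risk mu Om E = (mu^T *m mu) 0 0 - (mu^T *m E *m mu) 0 0 + \tr (E *m Om).
Proof.
move=> hE; have [ET EE] := hE; rewrite /risk sqnormE.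
have -> : ((E - 1%:M) *m mu)^T *m ((E - 1%:M) *m mu) = mu^T *m (1%:M - E) *m mu.
  have -> : (E - 1%:M) *m mu = - ((1%:M - E) *m mu) by rewrite -mulNmx opprB.
  have tN : forall w : 'cV[R]_n, (- w)^T = - w^T by move=> w; apply/matrixP=> i j; rewrite !mxE.
  rewrite tN mulNmx mulmxN opprK.
  apply/matrixP => i j; rewrite !ord1 -symid_quad //; exact: symidC.
have sub00 : forall A B : 'M[R]_1, (A - B) 0 0 = A 0 0 - B 0 0 by move=> A B; rewrite !mxE.
rewrite mulmxBr mulmxBl mulmx1 sub00; congr (_ - _ + _).
by rewrite ET mxtrace_mulC mulmxA EE.
Qed.
Lemma trZ m k c (M : 'M[R]_(m,k)) : (c *: M)^T = c *: M^T.
Proof. by apply/matrixP => i j; rewrite !mxE. Qed.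

Lemma LB n K (mu : 'cV[R]_n) (Om A Q : 'M[R]_n) (D : nat -> 'M[R]_n)
  (a : nat -> R) (c1 : R) :
  (1 <= K)%N -> 0 <= c1 ->
  (forall x : 'cV[R]_n, c1 * (x^T *m x) 0 0 <= (x^T *m Om *m x) 0 0) ->
  A^T = A -> symid Q -> Q = \sum_(1 <= j < K.+1) D j ->
  (forall j, (1 <= j <= K)%N -> [/\ symid (D j), 1 <= \tr (D j),
      A *m D j = a j *: D j & 0 <= a K <= a j]) ->
  c1 * K%:R * a K ^+ 2 + (1 - a K) ^+ 2 * (mu^T *m D K *m mu) 0 0
    <= risk mu Om A.
Proof.
move=> K1 c1ge0 Hq AT hQ HQ HD.
have [hDK trDK ADK /andP[aK0 _]] := HD K (introT andP (conj K1 (leqnn K))).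
rewrite /risk [X in _ <= X]addrC; apply: lerD.
  apply: le_trans _ (tr_lb A Hq); rewrite -mulrA; apply: ler_wpM2l => //.
  have -> : A *m A^T = A *m Q *m A^T + A *m (1%:M - Q) *m A^T.
    by rewrite -mulmxDl -mulmxDr addrC subrK mulmx1.
  rewrite linearD /=; apply: ler_wpDr.
    by rewrite symid_tr ?tr_ge0 //; exact: symidC.
  rewrite HQ mulmx_sumr mulmx_suml linear_sum /=.
  have -> : K%:R * a K ^+ 2 = \sum_(1 <= j < K.+1) a K ^+ 2.
    by rewrite sumr_const_nat subn1 /= mulr_natl.
  apply: ler_sum_nat => j /andP[j1 jK]; rewrite ltnS in jK.
  have [hDj trDj ADj /andP[_ aKj]] := HD j (introT andP (conj j1 jK)).
  rewrite symid_tr // ADj.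
  have [DT DD] := hDj.
  have tZ : forall c (M : 'M[R]_n), (c *: M)^T = c *: M^T.
    by move=> c M; apply/matrixP => i k; rewrite !mxE.
  rewrite tZ DT -scalemxAl -scalemxAr DD !linearZ /= mulrA -expr2.
  apply: (le_trans (_ : _ <= a j ^+ 2 * 1)).
    by rewrite mulr1; apply: lerXn2r => //; rewrite ?nnegrE ?(le_trans aK0).
  by apply: ler_wpM2l => //; rewrite sqr_ge0.
have tZ : forall c (M : 'M[R]_(n,1)), (c *: M)^T = c *: M^T.
  by move=> c M; apply/matrixP => i k; rewrite !mxE.
rewrite sqnormE; set v := (A - 1%:M) *m mu.
have -> : v^T *m v = v^T *m D K *m v + v^T *m (1%:M - D K) *m v.
  by rewrite -mulmxDl -mulmxDr addrC subrK mulmx1.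
rewrite [X in _ <= X]mxE; apply: ler_wpDr.
  by rewrite symid_quad ?quad_ge0 //; exact: symidC.
rewrite [X in _ <= X]symid_quad //.
have [DT DD] := hDK.
have -> : D K *m v = (a K - 1) *: (D K *m mu).
  have tZ' : forall c (M : 'M[R]_n), (c *: M)^T = c *: M^T.
    by move=> c M; apply/matrixP => i k; rewrite !mxE.
  have DA : D K *m A = a K *: D K by rewrite -DT -AT -trmx_mul ADK; by rewrite tZ' DT.
  by rewrite /v mulmxA mulmxBr DA mulmx1 scalemxAl scalerBl scale1r.
have sc00 : forall c (M : 'M[R]_1), (c *: M) 0 0 = c * M 0 0 by move=> c M; rewrite mxE.
rewrite trZ -scalemxAl -scalemxAr !sc00 -(symid_quad _ hDK).
have -> : (a K - 1) * ((a K - 1) * (mu^T *m D K *m mu) 0 0) = (1 - a K) ^+ 2 * (mu^T *m D K *m mu) 0 0 by ring.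
by [].
Qed.
Lemma nat_big (x : R) : exists N : nat, forall m, (N <= m)%N -> x <= m%:R.
Proof.
exists (Num.Def.archi_bound `|x|) => m hm.
apply: le_trans (real_ler_norm (num_real x)) _.
apply: le_trans (ltW (archi_boundP (normr_ge0 x))) _.
by rewrite ler_nat.
Qed.

Section Fam.
Variables (n p q : nat) (X : 'M[R]_(n,p)) (nu : nat -> nat).
Hypothesis nu0 : nu 0%N = 0%N.
Hypothesis nuinc : forall m, (m < q)%N -> (nu m < nu m.+1)%N.
Hypothesis rk : forall m, (1 <= m <= q)%N -> \rank (firstcols X (nu m)) = nu m.
Local Notation P m := (proj X (nu m)).
Local Notation D m := (proj X (nu m) - proj X (nu m.-1)).

Lemma nu_mono i j : (i <= j <= q)%N -> (nu i <= nu j)%N.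
Proof.
elim: j => [|j IH] /andP[ij jq]; first by rewrite leqn0 in ij; rewrite (eqP ij).
rewrite leq_eqVlt in ij; case/orP: ij => [/eqP -> //|ij].
apply: leq_trans (ltnW (nuinc jq)).
by apply: IH; rewrite -ltnS ij /= ltnW.
Qed.

Lemma P_symid_tr m : (m <= q)%N -> symid (P m) /\ \tr (P m) = (nu m)%:R.
Proof.
case: m => [|m] mq; first by rewrite nu0 proj0 linear0; split => //; exact: symid0.
by have [? _ ?] := proj_props (rk (introT andP (conj (isT : (0 < m.+1)%N) mq))).
Qed.

Lemma P_nest i j : (i <= j <= q)%N -> P j *m P i = P i /\ P i *m P j = P i.
Proof.
case: i => [|i] /andP[ij jq]; first by rewrite nu0 proj0 mulmx0 mul0mx.
have rki := rk (introT andP (conj (isT : (0 < i.+1)%N) (leq_trans ij jq))).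
have rkj := rk (introT andP (conj (leq_trans (isT : (0 < i.+1)%N) ij) jq)).
have [[STj _] PYj _] := proj_props rkj.
have [[STi _] _ _] := proj_props rki.
have E1 : P j *m P i.+1 = P i.+1.
  have E : P i.+1 = firstcols X (nu i.+1) *m (invmx ((firstcols X (nu i.+1))^T *m firstcols X (nu i.+1)) *m (firstcols X (nu i.+1))^T).
    by rewrite mulmxA.
  rewrite [in LHS]E mulmxA (firstcols_nest X (nu_mono (introT andP (conj ij jq)))).
  by rewrite mulmxA PYj -firstcols_nest ?nu_mono ?ij // -E.
split => //.
by rewrite -{1}STi -{1}STj -trmx_mul E1 STi.
Qed.

Lemma D_symid m : (1 <= m <= q)%N -> symid (D m).
Proof.
case: m => [//|m] /= mq.
have [[PT PP] _] := P_symid_tr mq.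
have [[QT QQ] _] := P_symid_tr (ltnW mq).
have [N1 N2] := P_nest (introT andP (conj (leqnSn m) mq)).
split; first by rewrite linearB /= PT QT.
by rewrite mulmxBl !mulmxBr PP QQ N1 N2 subrr subr0.
Qed.

Lemma D_tr m : (1 <= m <= q)%N -> 1 <= \tr (D m).
Proof.
case: m => [//|m] /= mq.
rewrite linearB /=.
have [_ ->] := P_symid_tr mq.
have [_ ->] := P_symid_tr (ltnW mq).
rewrite -natrB; last exact: ltnW (nuinc mq).
by rewrite ler1n subn_gt0; exact: nuinc mq.
Qed.

Lemma PD m j : (m <= q)%N -> (1 <= j <= q)%N ->
  P m *m D j = if (j <= m)%N then D j else 0.
Proof.
move=> mq; case: j => [//|j] /= jq.
rewrite mulmxBr; case: ifP => jm.
  have [-> _] := P_nest (introT andP (conj jm mq)).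
  by have [-> _] := P_nest (introT andP (conj (ltnW jm) mq)).
have mj : (m <= j)%N by rewrite leqNgt jm.
have [_ ->] := P_nest (introT andP (conj (leq_trans mj (leqnSn j)) jq)).
by have [_ ->] := P_nest (introT andP (conj mj (ltnW jq))); rewrite subrr.
Qed.

Lemma sumD K : (K <= q)%N -> P K = \sum_(1 <= j < K.+1) D j.
Proof.
elim: K => [|K IH] Kq; first by rewrite big_geq // nu0 proj0.
by rewrite big_nat_recr //= -IH ?(ltnW Kq) // addrC subrK.
Qed.

Lemma trDOm m (Om : 'M[R]_n) c1 : (1 <= m <= q)%N -> 0 <= c1 ->
  (forall x : 'cV[R]_n, c1 * (x^T *m x) 0 0 <= (x^T *m Om *m x) 0 0) ->
  c1 <= \tr (D m *m Om).
Proof.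
move=> hm c0 Hq; have [DT DD] := D_symid hm.
have -> : \tr (D m *m Om) = \tr (D m *m Om *m (D m)^T).
  by rewrite DT [RHS]mxtrace_mulC mulmxA DD.
apply: le_trans _ (tr_lb _ Hq); rewrite DT DD.
by rewrite -{1}(mulr1 c1); apply: ler_wpM2l => //; exact: D_tr.
Qed.

Lemma risk_diff (mu : 'cV[R]_n) (Om : 'M[R]_n) m : (1 <= m <= q)%N ->
  risk mu Om (P m) = risk mu Om (P m.-1) - (mu^T *m D m *m mu) 0 0 + \tr (D m *m Om).
Proof.
case: m => [//|m] /= mq.
have [h1 _] := P_symid_tr mq.
have [h2 _] := P_symid_tr (ltnW mq).
have sub00 : forall A B : 'M[R]_1, (A - B) 0 0 = A 0 0 - B 0 0 by move=> A B; rewrite !mxE.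
rewrite !risk_symid // mulmxBr mulmxBl sub00 mulmxBl linearB /=; lra.
Qed.

Lemma lb_m (mu : 'cV[R]_n) (Om : 'M[R]_n) c1 K m :
  (1 <= K <= q)%N -> (1 <= m <= q)%N -> 0 <= c1 ->
  (forall x : 'cV[R]_n, c1 * (x^T *m x) 0 0 <= (x^T *m Om *m x) 0 0) ->
  exists a, 0 <= a /\
    c1 * K%:R * a ^+ 2 + (1 - a) ^+ 2 * (mu^T *m D K *m mu) 0 0 <= risk mu Om (P m).
Proof.
move=> /andP[K1 Kq] /andP[m1 mq] c0 Hq.
exists (if (K <= m)%N then 1 else 0); split; first by case: ifP.
apply: (@LB n K mu Om (P m) (P K) (fun j => D j) (fun j => if (j <= m)%N then 1 else 0) c1) => //.
- by case: (P_symid_tr mq) => [[]].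
- by have [] := P_symid_tr Kq.
- exact: sumD.
move=> j /andP[j1 jK]; have jq : (1 <= j <= q)%N by rewrite j1 (leq_trans jK Kq).
split; [exact: D_symid | exact: D_tr | |].
  by rewrite PD //; case: ifP => _; rewrite ?scale1r ?scale0r.
case: ifP => Km; first by rewrite (leq_trans jK Km) lexx ler01.
by case: ifP => _; rewrite lexx ?ler01.
Qed.

Lemma lb_w (mu : 'cV[R]_n) (Om : 'M[R]_n) c1 K M (w : 'rV[R]_M) :
  (M <= q)%N -> simplexW w ->
  (1 <= K <= q)%N -> 0 <= c1 ->
  (forall x : 'cV[R]_n, c1 * (x^T *m x) 0 0 <= (x^T *m Om *m x) 0 0) ->
  exists a, 0 <= a /\
    c1 * K%:R * a ^+ 2 + (1 - a) ^+ 2 * (mu^T *m D K *m mu) 0 0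
      <= risk mu Om (\sum_(i < M) w 0 i *: P i.+1).
Proof.
move=> Mq [w01 _] /andP[K1 Kq] c0 Hq.
have w0 : forall i, 0 <= w 0 i by move=> i; have /andP[] := w01 i.
pose a j := \sum_(i < M) (if (j <= i.+1)%N then w 0 i else 0).
have a0 : forall j, 0 <= a j.
  by move=> j; apply: sumr_ge0 => i _; case: ifP.
exists (a K); split => //.
apply: (@LB n K mu Om _ (P K) (fun j => D j) a c1) => //.
- rewrite linear_sum /=; apply: eq_bigr => i _.
  have iq : (i.+1 <= q)%N by apply: leq_trans (ltn_ord i) Mq.
  by rewrite trZ; have [[-> _] _] := P_symid_tr iq.
- by have [] := P_symid_tr Kq.
- exact: sumD.
move=> j /andP[j1 jK]; have jq : (1 <= j <= q)%N by rewrite j1 (leq_trans jK Kq).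
split; [exact: D_symid | exact: D_tr | |].
  rewrite mulmx_suml /a scaler_suml; apply: eq_bigr => i _.
  have iq : (i.+1 <= q)%N by apply: leq_trans (ltn_ord i) Mq.
  rewrite -scalemxAl PD //; case: ifP => _; by rewrite ?scaler0 ?scale0r.
rewrite a0 /=; apply: ler_sum => i _.
case: ifP => Ki; first by rewrite (leq_trans jK Ki).
by case: ifP.
Qed.
End Fam.

Lemma final_num (B u v a : R) : 4 * B <= u -> 4 * B <= v -> 0 <= u -> 0 <= v ->
  B <= u * a ^+ 2 + (1 - a) ^+ 2 * v.
Proof.
move=> hu hv u0 v0.
have h1 : 0 <= u * a ^+ 2 by rewrite mulr_ge0 // sqr_ge0.
have h2 : 0 <= (1 - a) ^+ 2 * v by rewrite mulr_ge0 // sqr_ge0.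
case: (lerP B 0) => B0; first lra.
have h3 : 4 * B * a ^+ 2 <= u * a ^+ 2 by rewrite ler_wpM2r // sqr_ge0.
have h4 : (1 - a) ^+ 2 * (4 * B) <= (1 - a) ^+ 2 * v by rewrite ler_wpM2l // sqr_ge0.
have h5 : 0 <= B * (2 * a - 1) ^+ 2 by rewrite mulr_ge0 ?sqr_ge0 // ltW.
rewrite !expr2 in h3 h4 h5 *; nra.
Qed.

Lemma chain_le (th : nat -> R) q :
  (forall m, (1 <= m)%N -> (m < q)%N -> th m.+1 <= th m) ->
  forall i j, (1 <= i)%N -> (i <= j)%N -> (j <= q)%N -> th j <= th i.
Proof.
move=> H i j i1; elim: j => [|j IH] ij jq; first by move: (leq_trans i1 ij).
rewrite leq_eqVlt in ij; case/orP: ij => [/eqP -> //|ij].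
apply: le_trans (H _ _ _) (IH _ _) => //; first exact: leq_trans i1 ij.
exact: ltnW.
Qed.

Lemma theta_inv (nn L T th : R) : 0 < nn -> 0 < T -> th = (nn^-1 * L) / T ->
  L = nn * th * T.
Proof.
move=> n0 T0 ->; field; apply/andP; split; by rewrite gt_eqF.
Qed.
End Gen.

Unset Implicit Arguments.
Theorem theorem2 (R : realType)
  (p q M : nat -> nat) (nu : nat -> nat -> nat)
  (X : forall n : nat, 'M[R]_(n, p n))
  (beta : forall n : nat, 'cV[R]_(p n))
  (Om : forall n : nat, 'M[R]_n)
  (mss ms : nat -> nat) (ws : forall n : nat, 'rV[R]_(M n))
  (N0 : nat)
  (* standing setting, for all sufficiently large n *)
  (Hsetting : forall n : nat, (N0 <= n)%N ->
     (p n < n)%N /\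
     nu n 0%N = 0%N /\
     (forall m : nat, (m < q n)%N -> (nu n m < nu n m.+1)%N) /\
     nu n (q n) = p n /\
     (forall m : nat, (1 <= m <= q n)%N ->
        \rank (firstcols (X n) (nu n m)) = nu n m) /\
     posdef (Om n) /\
     (2 <= M n <= q n)%N)
  (* m_n^{**}: the unique minimiser of R_n(m) over 1..q_n *)
  (Hmss : forall n : nat, (N0 <= n)%N ->
     (1 <= mss n <= q n)%N /\
     forall m : nat, (1 <= m <= q n)%N -> m <> mss n ->
       risk_m (X n) (beta n) (Om n) (nu n) (mss n)
         < risk_m (X n) (beta n) (Om n) (nu n) m)
  (* m_n^{*}: the unique minimiser of R_n(m) over 1..M_n *)
  (Hms : forall n : nat, (N0 <= n)%N ->
     (1 <= ms n <= M n)%N /\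
     forall m : nat, (1 <= m <= M n)%N -> m <> ms n ->
       risk_m (X n) (beta n) (Om n) (nu n) (ms n)
         < risk_m (X n) (beta n) (Om n) (nu n) m)
  (* w_n^{*}: the unique minimiser of R_n(w) over W_n *)
  (Hws : forall n : nat, (N0 <= n)%N ->
     simplexW (ws n) /\
     forall w : 'rV[R]_(M n), simplexW w -> w <> ws n ->
       risk_w (X n) (beta n) (Om n) (nu n) (ws n)
         < risk_w (X n) (beta n) (Om n) (nu n) w)
  (* Assumption 1 *)
  (A1 : exists C : R, forall n : nat, (N0 <= n)%N ->
     sqnorm (X n *m beta n) / n%:R <= C)
  (* Assumption 2 *)
  (A2 : exists c1 c2 : R, [/\ 0 < c1, c1 <= c2 &
     forall n : nat, (N0 <= n)%N -> eig_between (Om n) c1 c2])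
  (* Assumption 3 *)
  (A3 : forall n : nat, (N0 <= n)%N ->
     forall m : nat, (1 <= m)%N -> (m < q n)%N ->
       theta (X n) (beta n) (Om n) (nu n) m.+1
         <= theta (X n) (beta n) (Om n) (nu n) m)
  (* Assumption 4 *)
  (A4 : exists V : nat, (1 <= V)%N /\ forall n : nat, (N0 <= n)%N ->
     forall m : nat, (1 <= m <= dn (X n) (beta n) (Om n) (nu n) (q n))%N ->
       (nu n m - nu n m.-1 <= V)%N)
  (* Assumption 5 *)
  (A5 : forall m : nat, (0 < m)%N ->
     exists thb : R, 0 < thb /\ exists K : nat, forall n : nat, (K <= n)%N ->
       (m <= dn (X n) (beta n) (Om n) (nu n) (q n))%N /\
       thb <= theta (X n) (beta n) (Om n) (nu n) m)
  (* Assumption 6 *)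
  (A6 : forall n : nat, (N0 <= n)%N ->
     let d := dn (X n) (beta n) (Om n) (nu n) (q n) in
     let Rn := risk_m (X n) (beta n) (Om n) (nu n) in
     exists m' : nat, [/\ (1 <= m')%N, (m' <= d.-1)%N,
       (forall m : nat, (2 <= m <= m')%N -> Rn m < Rn m.-1),
       (forall m : nat, (m' < m <= d)%N -> Rn m.-1 <= Rn m) &
       Rn d.-1 < Rn d]) :
  (* (i) m_n^{**} -> oo *)
  (forall K : nat, exists N : nat, forall n : nat, (N <= n)%N -> (K <= mss n)%N)
  /\
  (* (ii) R_n(m_n^{*}) -> oo and R_n(w_n^{*}) -> oo *)
  (forall B : R, exists N : nat, forall n : nat, (N <= n)%N ->
     B <= risk_m (X n) (beta n) (Om n) (nu n) (ms n))
  /\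
  (forall B : R, exists N : nat, forall n : nat, (N <= n)%N ->
     B <= risk_w (X n) (beta n) (Om n) (nu n) (ws n)).
Proof.
have [c1 [c2 [c1pos _ Heig]]] := A2.
have c0 : 0 <= c1 := ltW c1pos.
have Hq : forall n, (N0 <= n)%N -> forall x : 'cV[R]_n,
    c1 * (x^T *m x) 0 0 <= (x^T *m Om n *m x) 0 0.
  move=> n hn; have [_ [_ [_ [_ [_ [[OmT _] _]]]]]] := Hsetting n hn.
  apply: quad_lb => // a ha; by have /andP[] := Heig n hn a ha.
have dnq : forall n, (dn (X n) (beta n) (Om n) (nu n) (q n) <= q n)%N.
  by move=> n; apply/bigmax_leqP => i _; rewrite -ltnS; exact: ltn_ord i.
have key : forall n, (N0 <= n)%N -> forall K, (1 <= K <= q n)%N ->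
   c1 <= \tr ((proj (X n) (nu n K) - proj (X n) (nu n K.-1)) *m Om n) /\
   ((X n *m beta n)^T *m (proj (X n) (nu n K) - proj (X n) (nu n K.-1)) *m (X n *m beta n)) 0 0
   = n%:R * theta (X n) (beta n) (Om n) (nu n) K *
     \tr ((proj (X n) (nu n K) - proj (X n) (nu n K.-1)) *m Om n).
  move=> n hn K hK.
  have [pn [nu0 [nuinc [_ [rk _]]]]] := Hsetting n hn.
  have T1 := trDOm nu0 nuinc rk hK c0 (Hq n hn).
  split => //; apply: theta_inv; last by [].
    by rewrite ltr0n; apply: leq_ltn_trans pn.
  exact: lt_le_trans T1.
split.
  move=> K; case: K => [|K]; first by exists 0%N.
  have [thb [thb0 [KK HK]]] := A5 K.+1 isT.
  have [N1 HN1] := nat_big (2 / thb).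
  exists (N0 + KK + N1)%N => n hn.
  have hN0 : (N0 <= n)%N by apply: leq_trans hn; rewrite -addnA leq_addr.
  have hKK : (KK <= n)%N.
    by apply: leq_trans hn; apply: leq_trans (leq_addr N1 _); exact: leq_addl.
  have hN1 : (N1 <= n)%N by apply: leq_trans hn; rewrite leq_addl.
  have [Kd thK] := HK n hKK.
  have Kq := leq_trans Kd (dnq n).
  have [/andP[s1 sq] Hs] := Hmss n hN0.
  case: (ltnP K (mss n)) => // sK.
  have [pn [nu0 [nuinc [_ [rk _]]]]] := Hsetting n hN0.
  set s := mss n in s1 sq Hs sK.
  have sK' : (s.+1 <= K.+1)%N by rewrite ltnS.
  have hm : (1 <= s.+1 <= q n)%N by rewrite /= (leq_trans sK' Kq).
  have thm : thb <= theta (X n) (beta n) (Om n) (nu n) s.+1.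
    apply: le_trans thK _; apply: (chain_le (q := q n)) => //.
    by move=> m m1 mq; apply: A3.
  have [T1 LE] := key n hN0 s.+1 hm.
  have RD := risk_diff nu0 rk (X n *m beta n) (Om n) hm.
  have := Hs s.+1 hm (fun e => n_Sn s (esym e)).
  rewrite /risk_m RD /=.
  have nthb : 2 <= n%:R * thb.
    have := HN1 n hN1; rewrite ler_pdivrMr // => h; by rewrite [c1 * _]mulrC.
  set T := \tr _ in T1 LE *; set L := (_ 0 0) in LE *.
  set th := theta _ _ _ _ _ in thm LE.
  have n0 : 0 <= (n%:R : R) by [].
  have : n%:R * thb <= n%:R * th by rewrite ler_wpM2l.
  move=> h1 h2; nra.
have claim : forall B : R, exists N, forall n, (N <= n)%N -> (N0 <= n)%N /\
   exists K, (1 <= K <= q n)%N /\ forall a, 0 <= a -> B <= c1 * K%:R * a ^+ 2 +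
   (1 - a) ^+ 2 * ((X n *m beta n)^T *m (proj (X n) (nu n K) - proj (X n) (nu n K.-1)) *m (X n *m beta n)) 0 0.
  move=> B.
  have [K0 HK0] := nat_big (4 * B / c1).
  have [thb [thb0 [KK HK]]] := A5 K0.+1 isT.
  have [N1 HN1] := nat_big (4 * B / (thb * c1)).
  exists (N0 + KK + N1)%N => n hn.
  have hN0 : (N0 <= n)%N by apply: leq_trans hn; rewrite -addnA leq_addr.
  have hKK : (KK <= n)%N.
    by apply: leq_trans hn; apply: leq_trans (leq_addr N1 _); exact: leq_addl.
  have hN1 : (N1 <= n)%N by apply: leq_trans hn; rewrite leq_addl.
  split => //.
  have [Kd thK] := HK n hKK.
  have hK : (1 <= K0.+1 <= q n)%N by rewrite /= (leq_trans Kd (dnq n)).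
  exists K0.+1; split => // a a0.
  have [T1 LE] := key n hN0 K0.+1 hK.
  rewrite LE; apply: final_num.
  - have := HK0 K0.+1 (leqnSn K0); rewrite ler_pdivrMr // => h; by rewrite [c1 * _]mulrC.
  - have := HN1 n hN1; rewrite ler_pdivrMr ?mulr_gt0 // => h.
    set T := \tr _ in T1 *; set th := theta _ _ _ _ _ in thK *.
    have n0 : 0 <= (n%:R : R) by [].
    have h2 : n%:R * thb <= n%:R * th by rewrite ler_wpM2l.
    have h3 : n%:R * th * c1 <= n%:R * th * T.
      by rewrite ler_wpM2l // mulr_ge0 // (le_trans (ltW thb0)).
    nra.
  - by rewrite mulr_ge0.
  - set T := \tr _ in T1 *; set th := theta _ _ _ _ _ in thK *.
    apply: mulr_ge0; last exact: le_trans c0 T1.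
    by apply: mulr_ge0 => //; exact: le_trans (ltW thb0) thK.
split.
  move=> B; have [N HN] := claim B; exists N => n hn.
  have [hN0 [K [hK Hb]]] := HN n hn.
  have [pn [nu0 [nuinc [_ [rk _]]]]] := Hsetting n hN0.
  have [/andP[m1 mM] _] := Hms n hN0.
  have [_ [_ [_ [_ [_ [_ /andP[_ Mq]]]]]]] := Hsetting n hN0.
  have [a [a0 Ha]] := lb_m nu0 nuinc rk (X n *m beta n) hK
     (introT andP (conj m1 (leq_trans mM Mq))) c0 (Hq n hN0).
  apply: le_trans (Hb a a0) Ha.
move=> B; have [N HN] := claim B; exists N => n hn.
have [hN0 [K [hK Hb]]] := HN n hn.
have [pn [nu0 [nuinc [_ [rk _]]]]] := Hsetting n hN0.
have [hW _] := Hws n hN0.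
have [_ [_ [_ [_ [_ [_ /andP[_ Mq]]]]]]] := Hsetting n hN0.
have [a [a0 Ha]] := lb_w nu0 nuinc rk (X n *m beta n) Mq hW hK c0 (Hq n hN0).
apply: le_trans (Hb a a0) Ha.
Qed.
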